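(* Let $\phi$ be a constant Drinfeld $A[\underline{t}_s]$-module of rank $r\ge1$, i.e. $\phi_\theta=\theta+A_1\tau+\dots+A_r\tau^r$ with all $A_i\in\mathbb{C}_\infty$, $A_r\neq0$, and suppose $\lambda_1,\dots,\lambda_r\in\mathbb{C}_\infty$ form an $A$-basis of the kernel of $\exp_\phi:\mathbb{C}_\infty\to\mathbb{C}_\infty$ (the period lattice of $\phi$ viewed as a Drinfeld $A$-module over $\mathbb{C}_\infty$). Then $\lambda_1,\dots,\lambda_r$ form an $A[\underline{t}_s]$-basis of $\Lambda_\phi=\ker(\exp_\phi:\mathbb{T}_s\to\mathbb{T}_s)$.
   Context: $\mathbb{F}_q$ finite field, $\theta,t_1,\dots,t_s$ independent variables, $A=\mathbb{F}_q[\theta]$, $A[\underline{t}_s]=\mathbb{F}_q[\theta,t_1,\dots,t_s]$, $\mathbb{F}_q[\underline{t}_s]=\mathbb{F}_q[t_1,\dots,t_s]$. $\mathbb{C}_\infty$: completion of an algebraic closure of $\mathbb{F}_q((1/\theta))$. $\mathbb{T}_s$: Tate algebra of power series in $t_1,\dots,t_s$ over $\mathbb{C}_\infty$ with coefficients tending to $0$. $\tau$ raises $\mathbb{C}_\infty$-coefficients to the $q$-th power; $\mathbb{T}_s[\tau]$, $\mathbb{T}_s[[\tau]]$ are twisted rings with $\tau f=f^{(1)}\tau$, acting by $\sum a_i\tau^i(f)=\sum a_if^{(i)}$. A Drinfeld $A[\underline{t}_s]$-module is an $\mathbb{F}_q[\underline{t}_s]$-algebra homomorphism $\phi:A[\underline{t}_s]\to\mathbb{T}_s[\tau]$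 with $\phi_\theta=\theta+A_1\tau+\dots+A_r\tau^r$. $\exp_\phi=\sum\alpha_i\tau^i$ is the unique series with $\alpha_0=1$, $\exp_\phi a=\phi_a\exp_\phi$; for constant $\phi$ its coefficients lie in $\mathbb{C}_\infty$ and it converges on $\mathbb{C}_\infty$ and on $\mathbb{T}_s$. *)

(* Defs.v *)
From HB Require Import structures.
From mathcomp Require Import all_boot all_order all_algebra all_field.
From mathcomp Require Import reals.
From mathcomp Require Import mpoly.
Set Implicit Arguments. Unset Strict Implicit. Unset Printing Implicit Defensive.
Import Order.TTheory GRing.Theory Num.Theory.
Local Open Scope ring_scope.

Section Cinfty.
(* F = F_q (q = #|F|), C = C_oo, iota : F -> C the structure map,
   theta : C the variable, nu : C -> R the absolute value of C_oo. *)
Variables (F : finFieldType) (C : closedFieldType) (iota : {rmorphism F -> C})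
  (theta : C) (R : realType) (nu : C -> R).

Definition qq : nat := #|F|.

Definition evA (a : {poly F}) : C := (map_poly iota a).[theta].

Definition cvgC (u : nat -> C) (l : C) : Prop :=
  forall eps : R, 0 < eps -> exists N : nat, forall n, (N <= n)%N -> nu (l - u n) < eps.
Definition cauchyC (u : nat -> C) : Prop :=
  forall eps : R, 0 < eps -> exists N : nat,
    forall m n, (N <= m)%N -> (N <= n)%N -> nu (u m - u n) < eps.

Definition algebraic_over_Ftheta (y : C) : Prop :=
  exists P : {poly {poly F}}, P != 0 /\ (map_poly evA P).[y] = 0.

(* (C, nu, theta) is (a model of) C_oo: the completion of an algebraic closure
   of F_q((1/theta)), characterised up to isometric isomorphism as a complete,
   algebraically closed field with a non-archimedean absolute value extending the
   (1/theta)-adic one of F_q(theta) (|theta| = q), in which the algebraic closure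
   of F_q(theta) is dense. *)
Definition is_Cinfty : Prop :=
  [/\ [/\ (forall x, 0 <= nu x),
          (forall x, (nu x == 0) = (x == 0)),
          (forall x y, nu (x * y) = nu x * nu y) &
          (forall x y, nu (x + y) <= Num.max (nu x) (nu y))],
      nu theta = (qq%:R : R),
      (forall u, cauchyC u -> exists l, cvgC u l) &
      (forall x (eps : R), 0 < eps -> exists y, algebraic_over_Ftheta y /\ nu (x - y) < eps)].

(* Twisted (Frobenius-skew) product of coefficient sequences in C[[tau]]:
   (sum a_i tau^i)(sum b_j tau^j) = sum_n (sum_{i+j=n} a_i b_j^(q^i)) tau^n. *)
Definition twmul (a b : nat -> C) : nat -> C :=
  fun n => \sum_(i < n.+1) a i * b (n - i)%N ^+ (qq ^ i).

Definition phi_theta (r : nat) (Acoef : nat -> C) : nat -> C :=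
  fun n => if n == 0%N then theta else if (n <= r)%N then Acoef n else 0.

Definition constS (c : C) : nat -> C := fun n => if n == 0%N then c else 0.

(* alpha is the coefficient sequence of exp_phi: alpha_0 = 1 and
   exp_phi theta = phi_theta exp_phi in C[[tau]]. *)
Definition is_exp_coeffs (r : nat) (Acoef : nat -> C) (alpha : nat -> C) : Prop :=
  alpha 0%N = 1 /\
  forall n, twmul alpha (constS theta) n = twmul (phi_theta r Acoef) alpha n.

Definition kerC (alpha : nat -> C) (x : C) : Prop :=
  cvgC (fun n => \sum_(i < n) alpha i * x ^+ (qq ^ i)) 0.

Definition A_basis (r : nat) (M : C -> Prop) (lam : 'I_r -> C) : Prop :=
  [/\ (forall i, M (lam i)),
      (forall x, M x -> exists c : 'I_r -> {poly F}, x = \sum_(i < r) evA (c i) * lam i) &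
      (forall c : 'I_r -> {poly F}, \sum_(i < r) evA (c i) * lam i = 0 -> forall i, c i = 0)].

(* ---- Tate algebra T_s : series sum_m f_m t^m, m in 'X_{1..s}, f_m -> 0. ---- *)
Definition tate (s : nat) (f : 'X_{1..s} -> C) : Prop :=
  forall eps : R, 0 < eps -> exists N : nat, forall m, (N <= mdeg m)%N -> nu (f m) < eps.

(* Convergence in T_s for the Gauss norm ||f|| = sup_m nu (f m). *)
Definition cvgT (s : nat) (u : nat -> 'X_{1..s} -> C) (l : 'X_{1..s} -> C) : Prop :=
  forall eps : R, 0 < eps -> exists N : nat, forall n, (N <= n)%N ->
    forall m, nu (l m - u n m) < eps.

(* tau^i acting on T_s: raise the C-coefficients to the q^i-th power. *)
Definition frobT (s : nat) (i : nat) (f : 'X_{1..s} -> C) : 'X_{1..s} -> C :=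
  fun m => f m ^+ (qq ^ i).

Definition expT_partial (s : nat) (alpha : nat -> C) (f : 'X_{1..s} -> C)
  : nat -> 'X_{1..s} -> C :=
  fun n m => \sum_(i < n) alpha i * frobT i f m.

Definition LambdaT (s : nat) (alpha : nat -> C) (f : 'X_{1..s} -> C) : Prop :=
  tate f /\ cvgT (expT_partial alpha f) (fun _ => 0).

Definition constT (s : nat) (x : C) : 'X_{1..s} -> C :=
  fun m => if m == 0%MM then x else 0.

Definition actT (s : nat) (a : {mpoly {poly F}[s]}) (f : 'X_{1..s} -> C)
  : 'X_{1..s} -> C :=
  fun n => \sum_(m <- msupp a | (m <= n)%MM) evA (a@_m) * f (n - m)%MM.

Definition sumT (s r : nat) (g : 'I_r -> 'X_{1..s} -> C) : 'X_{1..s} -> C :=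
  fun m => \sum_(i < r) g i m.

Definition At_basis (s r : nat) (M : ('X_{1..s} -> C) -> Prop)
  (b : 'I_r -> 'X_{1..s} -> C) : Prop :=
  [/\ (forall i, M (b i)),
      (forall f, M f -> exists c : 'I_r -> {mpoly {poly F}[s]},
          f = sumT (fun i => actT (c i) (b i))) &
      (forall c : 'I_r -> {mpoly {poly F}[s]},
          sumT (fun i => actT (c i) (b i)) = (fun _ => 0) -> forall i, c i = 0)].

End Cinfty.

(* Main.v *)
Require Import Defs.
From HB Require Import structures.
From mathcomp Require Import all_boot all_order all_algebra all_field.
From mathcomp Require Import reals.
From mathcomp Require Import mpoly.
From mathcomp Require Import ring lra.
From Stdlib Require Import ClassicalEpsilon FunctionalExtensionality.
Import Order.TTheory GRing.Theory Num.Theory.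
Local Open Scope ring_scope.
Set Implicit Arguments. Unset Strict Implicit.
Section Nu.
Variables (C : closedFieldType) (R : realType) (nu : C -> R).
Hypotheses (nu_ge0 : forall x, 0 <= nu x) (nu_eq0 : forall x, (nu x == 0) = (x == 0))
  (nuM : forall x y, nu (x * y) = nu x * nu y)
  (nuU : forall x y, nu (x + y) <= Num.max (nu x) (nu y)).

Lemma nu0 : nu 0 = 0. Proof. by apply/eqP; rewrite nu_eq0. Qed.

Lemma nu1 : nu 1 = 1.
Proof.
have h : nu 1 * nu 1 = nu 1 * 1 by rewrite -nuM !mulr1.
have nz : nu 1 != 0 by rewrite nu_eq0 oner_neq0.
exact: (mulfI nz h).
Qed.

Lemma nuN x : nu (- x) = nu x.
Proof.
have h : nu (-1) * nu (-1) = 1 by rewrite -nuM mulrNN mulr1 nu1.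
have h0 := nu_ge0 (-1).
have e : nu (-1) = 1 by nra.
by rewrite -mulN1r nuM e mul1r.
Qed.

Lemma nuX x k : nu (x ^+ k) = nu x ^+ k.
Proof. by elim: k => [|k IH]; rewrite ?expr0 ?nu1 // !exprS nuM IH. Qed.

Lemma nuB x y : nu (x - y) <= Num.max (nu x) (nu y).
Proof. by rewrite -(nuN y); apply: nuU. Qed.

Lemma nu_sum_lt n (G : 'I_n -> C) t : 0 < t -> (forall i, nu (G i) < t) ->
  nu (\sum_(i < n) G i) < t.
Proof.
move=> t0 hG; apply: (big_ind (fun y => nu y < t)); first by rewrite nu0.
  by move=> y z hy hz; apply: le_lt_trans (nuU _ _) _; rewrite gt_max hy hz.
by move=> i _; apply: hG.
Qed.

Lemma ultra_ge a b : nu b < nu a -> nu a <= nu (a + b).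
Proof.
move=> hb; have := nuU (a + b) (- b); rewrite addrK nuN le_max => /orP[//|].
by rewrite leNgt hb.
Qed.

Lemma discrete (q : nat) (hq : (2 <= q)%N) (alpha : nat -> C) (a0 : alpha 0%N = 1)
  (a : C) (ha : a != 0)
  (hka : forall eps, 0 < eps -> exists N, forall n, (N <= n)%N ->
     nu (0 - \sum_(i < n) alpha i * a ^+ (q ^ i)) < eps) :
  exists2 delta, 0 < delta & forall x, (forall eps, 0 < eps -> exists N, forall n,
     (N <= n)%N -> nu (0 - \sum_(i < n) alpha i * x ^+ (q ^ i)) < eps) ->
     nu x < delta -> x = 0.
Proof.
set rho := nu a.
have rho_gt0 : 0 < rho by rewrite lt_def nu_eq0 ha nu_ge0.
have [K K_gt0 hK] : exists2 K, 0 < K & forall i, nu (alpha i) * rho ^+ (q ^ i) <= K.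
  have [N hN] := hka 1 ltr01.
  have hs : 0 <= \sum_(i < N) nu (alpha i * a ^+ (q ^ i)) by apply: sumr_ge0.
  exists (1 + \sum_(i < N) nu (alpha i * a ^+ (q ^ i))); first by lra.
  move=> i; rewrite -nuX -nuM.
  case: (ltnP i N) => hi.
    have h1 : nu (alpha i * a ^+ (q ^ i)) <= \sum_(i < N) nu (alpha i * a ^+ (q ^ i)).
      by rewrite (bigD1 (Ordinal hi)) //= lerDl sumr_ge0.
    lra.
  have e : alpha i * a ^+ (q ^ i) = \sum_(j < i.+1) alpha j * a ^+ (q ^ j)
      - \sum_(j < i) alpha j * a ^+ (q ^ j).
    by rewrite big_ord_recr /= addrC addrK.
  have h1 := hN i.+1 (leqW hi); have h2 := hN i hi.
  rewrite !sub0r !nuN in h1 h2.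
  have h3 : nu (alpha i * a ^+ (q ^ i)) < 1.
    by rewrite e; apply: le_lt_trans (nuB _ _) _; rewrite gt_max h1 h2.
  lra.
exists (Num.min rho (rho ^+ 2 / K)).
  by rewrite lt_min rho_gt0 divr_gt0 ?exprn_gt0.
move=> x hx hxd.
case: (eqVneq x 0) => // hx0; exfalso.
set t := nu x.
have t_gt0 : 0 < t by rewrite lt_def nu_eq0 hx0 nu_ge0.
move: hxd; rewrite lt_min => /andP[ht1 ht2].
have hterm : forall i, (0 < i)%N -> nu (alpha i * x ^+ (q ^ i)) < t.
  move=> i hi.
  set u := t / rho.
  have u_gt0 : 0 < u by rewrite divr_gt0.
  have hu1 : u <= 1 by rewrite ler_pdivrMr // mul1r ltW.
  have ex : t = rho * u by rewrite /u mulrC divfK // gt_eqF.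
  have hKu : K * u < rho.
    rewrite /u mulrA ltr_pdivrMr //.
    move: ht2; rewrite ltr_pdivlMr // -/t => ht2.
    by rewrite mulrC -expr2.
  have hqi : (2 <= q ^ i)%N.
    apply: (leq_trans hq); rewrite -{1}(expn1 q) leq_pexp2l //.
    exact: leq_trans _ hq.
  rewrite nuM nuX -/t ex exprMn mulrA.
  apply: le_lt_trans (_ : _ <= K * u ^+ 2) _.
    apply: ler_pM.
    - by rewrite mulr_ge0 ?exprn_ge0 ?nu_ge0 // ltW.
    - by rewrite exprn_ge0 // ltW.
    - exact: hK.
    - exact: ler_wiXn2l (ltW u_gt0) hu1 _ _ hqi.
  by rewrite expr2 mulrA ltr_pM2r.
have [N hN] := hx t t_gt0.
have h := hN N.+1 (leqnSn N).
rewrite sub0r nuN big_ord_recl /= expn0 expr1 a0 mul1r in h.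
have hrest : nu (\sum_(i < N) alpha (bump 0 i) * x ^+ (q ^ bump 0 i)) < t.
  by apply: nu_sum_lt => // i; apply: hterm.
by have := le_lt_trans (ultra_ge hrest) h; rewrite ltxx.
Qed.

End Nu.
Unset Implicit Arguments.

Lemma evA0 (F : finFieldType) (C : closedFieldType) (iota : {rmorphism F -> C}) (theta : C) :
  evA iota theta 0 = 0.
Proof. by rewrite /evA map_poly0 horner0. Qed.

Lemma evA1 (F : finFieldType) (C : closedFieldType) (iota : {rmorphism F -> C}) (theta : C) :
  evA iota theta 1 = 1.
Proof. by rewrite /evA rmorph1 hornerC. Qed.

Lemma actT_constT (F : finFieldType) (C : closedFieldType) (iota : {rmorphism F -> C})
  (theta : C) (s : nat) (c : {mpoly {poly F}[s]}) (x : C) (n : 'X_{1..s}) :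
  actT iota theta c (constT x) n = evA iota theta (c@_n) * x.
Proof.
rewrite /actT /constT big_mkcond /=.
transitivity (\sum_(m <- msupp c) (if m == n then evA iota theta (c@_m) * x else 0)).
  apply: eq_bigr => m _.
  case: (eqVneq m n) => [-> | hmn].
    by rewrite lepm_refl (_ : (n - n)%MM = 0%MM) ?eqxx //; apply/mnmP => i; rewrite !mnmE subnn.
  case: ifP => // hle; case: eqP => [h0|_]; last by rewrite mulr0.
  by case/eqP: hmn; rewrite -(submK hle) h0 add0m.
rewrite -big_mkcond /= -big_filter.
case: (boolP (n \in msupp c)) => hn.
  by rewrite (filter_pred1_uniq (msupp_uniq c) hn) big_seq1.
rewrite big1_seq ?(memN_msupp_eq0 hn) ?evA0 ?mul0r // => m.
by rewrite /= mem_filter => /andP[/eqP -> ]; rewrite (negbTE hn).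
Qed.

Theorem corollary8p3
  (F : finFieldType) (C : closedFieldType) (iota : {rmorphism F -> C})
  (theta : C) (R : realType) (nu : C -> R)
  (hC : is_Cinfty iota theta nu)
  (s r : nat) (hr : (1 <= r)%N) (Acoef : nat -> C) (hAr : Acoef r != 0)
  (alpha : nat -> C) (halpha : is_exp_coeffs F theta r Acoef alpha)
  (lam : 'I_r -> C)
  (hlam : A_basis iota theta (kerC F nu alpha) lam) :
  At_basis iota theta (@LambdaT F C R nu s alpha) (fun i => @constT C s (lam i)).
Proof.
case: hC => [[nu_ge0 nu_eq0 nuM nuU] _ _ _].
case: hlam => [hin hspan hind].
case: halpha => [a0 _].
have hq : (2 <= qq F)%N.
  by rewrite /qq; apply/card_gt1P; exists (0 : F), (1 : F); split; rewrite // eq_sym oner_eq0.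
have hq0 : forall j, (qq F ^ j == 0)%N = false.
  by move=> j; rewrite expn_eq0 gtn_eqF // (leq_trans _ hq).
pose i0 : 'I_r := Ordinal hr.
have hl0 : lam i0 != 0.
  apply/eqP => h0.
  have hs : \sum_(i < r) evA iota theta (if i == i0 then 1 else 0) * lam i = 0.
    rewrite (bigD1 i0) //= h0 mulr0 add0r big1 // => j /negbTE ->.
    by rewrite evA0 mul0r.
  have := hind _ hs i0; rewrite /= ?eqxx => /eqP.
  by rewrite oner_eq0.
have [delta dpos hdisc] := discrete nu_ge0 nu_eq0 nuM nuU hq a0 hl0 (hin i0).
split.
- move=> i; split.
    move=> eps he; exists 1%N => m hm; rewrite /constT.
    have : m != 0%MM by rewrite -mdeg_eq0 -lt0n.
    by move/negbTE => ->; rewrite (nu0 nu_eq0).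
  move=> eps he; have [N hN] := hin i eps he; exists N => n hn m.
  rewrite /expT_partial /frobT /constT.
  case: (m == 0%MM); first exact: hN.
  rewrite big1 ?subr0 ?(nu0 nu_eq0) // => j _.
  by rewrite expr0n hq0 mulr0.
- move=> f [hf hcv].
  have hk : forall m, kerC F nu alpha (f m).
    move=> m eps he; have [N hN] := hcv eps he; exists N => n hn.
    exact: hN n hn m.
  have [N hz] : exists N, forall m, (N <= mdeg m)%N -> f m = 0.
    have [N hN] := hf delta dpos; exists N => m hm.
    exact: hdisc (hk m) (hN m hm).
  have hex := fun m => hspan _ (hk m).
  pose cc m := proj1_sig (constructive_indefinite_description _ (hex m)).
  have hcc : forall m, f m = \sum_(i < r) evA iota theta (cc m i) * lam i.
    by move=> m; rewrite /cc; case: constructive_indefinite_description.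
  exists (fun i => \sum_(m : 'X_{1..s < N}) cc (bmnm m) i *: 'X_[bmnm m]).
  apply: functional_extensionality => n.
  rewrite /sumT; under eq_bigr do rewrite actT_constT.
  have hc : forall i, (\sum_(m : 'X_{1..s < N}) cc (bmnm m) i *: 'X_[bmnm m])@_n
      = if (mdeg n < N)%N then cc n i else 0.
    move=> i; rewrite raddf_sum /=.
    under eq_bigr do rewrite mcoeffZ mcoeffX.
    case: ifP => hn.
      rewrite (bigD1 (BMultinom hn)) //= eqxx mulr1 big1 ?addr0 // => j hj.
      case: eqP => [hjn|]; last by rewrite mulr0.
      by case/eqP: hj; apply: val_inj; rewrite /= hjn.
    rewrite big1 // => j _; case: eqP => [hjn|]; last by rewrite mulr0.
    by move: (bmdeg j); rewrite hjn hn.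
  rewrite (eq_bigr (fun i => evA iota theta
     (if (mdeg n < N)%N then cc n i else 0) * lam i)); last by move=> i _; rewrite hc.
  case hn: (mdeg n < N)%N; first exact: hcc.
  rewrite hz; last by rewrite leqNgt hn.
  rewrite big1 // => i _.
  by rewrite evA0 mul0r.
- move=> c hc i; apply/mpolyP => n; rewrite mcoeff0.
  have := congr1 (fun g => g n) hc; rewrite /sumT /=.
  under eq_bigr do rewrite actT_constT.
  by move=> h; apply: (hind (fun i => (c i)@_n) h i).
Qed.
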